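(* Let $k\ge 3$ be odd and $i\in\{1,\ldots,k-1\}$ such that $\binom{k}{i}$ and $\binom{k-1}{i}$ are both odd. Then $\lambda_{k-i+1}-\lambda_{k-i-1}\equiv 2\pmod 4$.
   Context: For $0\le i\le k$ and $j=0,\ldots,k$ define $\lambda_j=\sum_{\ell=0}^{k-i}(-1)^\ell\binom{j}{\ell}\binom{k-j}{i-j+\ell}^2$, with the convention $\binom{a}{b}=0$ unless $0\le b\le a$; these are the eigenvalues of the graph $J(2k,k,i)$ on $k$-subsets of $\{1,\ldots,2k\}$ (adjacent iff intersection has size $i$). *)

(* Defs.v *)
From mathcomp Require Import all_boot all_order all_algebra.
Set Implicit Arguments. Unset Strict Implicit. Unset Printing Implicit Defensive.
Import GRing.Theory Num.Theory.
Local Open Scope ring_scope.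

Definition binZ (a : nat) (b : int) : int :=
  match b with
  | Posz n => ('C(a, n))%:Z
  | Negz _ => 0
  end.

(* lambda_j of J(2k,k,i):
   sum_{l=0}^{k-i} (-1)^l C(j,l) C(k-j, i-j+l)^2 *)
Definition lam (k i j : nat) : int :=
  \sum_(0 <= l < (k - i).+1)
     (-1) ^+ l * ('C(j, l))%:Z * (binZ (k - j) (i%:Z - j%:Z + l%:Z)) ^+ 2.

(* Main.v *)
Require Import Defs.
From mathcomp Require Import all_boot all_order all_algebra.
From mathcomp Require Import ring zify.
Import GRing.Theory Num.Theory.
Set Implicit Arguments. Unset Strict Implicit. Unset Printing Implicit Defensive.

Lemma oddbinSS n m : odd 'C(n.+2, m.+2) = odd 'C(n, m.+2) (+) odd 'C(n, m).
Proof.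
rewrite !binS !oddD; case: (odd 'C(n, m.+2)); case: (odd 'C(n, m.+1)); by case: (odd 'C(n, m)).
Qed.

Lemma lucas0 a : forall b, odd 'C(a.*2, b.*2) = odd 'C(a,b) /\ odd 'C(a.*2, (b.*2).+1) = false.
Proof.
elim: a => [|a IH] b.
  by case: b.
case: b => [|b].
  by rewrite !bin0 bin1 doubleS /= odd_double.
have [h1 h2] := IH b.+1; have [h3 h4] := IH b.
rewrite !doubleS oddbinSS -doubleS h1 -doubleS h3 binS oddD.
split; first by [].
by rewrite oddbinSS -doubleS h2 h4.
Qed.

Lemma lucas00 a b : odd 'C(a.*2, b.*2) = odd 'C(a,b).
Proof. by have [] := lucas0 a b. Qed.
Lemma lucas01 a b : odd 'C(a.*2, (b.*2).+1) = false.
Proof. by have [] := lucas0 a b. Qed.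
Lemma lucas10 a b : odd 'C((a.*2).+1, b.*2) = odd 'C(a,b).
Proof.
case: b => [|b]; first by rewrite !bin0.
by rewrite doubleS binS oddD -doubleS lucas00 lucas01 addbF.
Qed.
Lemma lucas11 a b : odd 'C((a.*2).+1, (b.*2).+1) = odd 'C(a,b).
Proof. by rewrite binS oddD lucas00 lucas01. Qed.

Lemma sum_split n (F : nat -> nat) :
  \sum_(0 <= u < n.*2) F u = \sum_(0 <= v < n) (F (v.*2) + F (v.*2).+1).
Proof.
elim: n => [|n IH]; first by rewrite !big_geq.
by rewrite doubleS !big_nat_recr //= IH addnA.
Qed.

Lemma odd_sum_eq m n (F G : nat -> nat) :
  (forall v, odd (F v) = odd (G v)) ->
  odd (\sum_(m <= v < n) F v) = odd (\sum_(m <= v < n) G v).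
Proof.
move=> h; apply: (big_ind2 (fun x y => odd x = odd y)) => //.
by move=> x1 x2 y1 y2; rewrite !oddD => -> ->.
Qed.

Definition S P Q := \sum_(0 <= u < P) 'C(P,u.+1) * 'C(Q,u.+1) * 'C(Q,u).

Lemma S_ext P Q d : \sum_(0 <= u < P + d) 'C(P,u.+1) * 'C(Q,u.+1) * 'C(Q,u) = S P Q.
Proof.
elim: d => [|d IH]; first by rewrite addn0.
rewrite addnS big_nat_recr ?leq0n //= IH bin_small ?mul0n ?addn0 //; lia.
Qed.

Lemma sum_sq a b : odd (\sum_(0 <= v < a.+1) 'C(a,v) * 'C(b,v)) = odd 'C(a+b,a).
Proof.
rewrite (addnC a b) -binomial.Vandermonde big_mkord; congr odd.
apply: eq_bigr => [[v hv]] _ /=; rewrite mulnC bin_sub //.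
Qed.

Lemma S_rec P Q a b x y : (x <= 1)%N -> (y <= 1)%N -> P = a.*2 + x -> Q = b.*2 + y ->
  odd (S P Q) = (odd y && odd (S a b)) (+) (odd x && odd y && odd 'C(a+b,a)).
Proof.
move=> hx hy -> ->.
rewrite -(S_ext _ _ (a.*2 + x - a.*2 - x + (2 - x))).
have -> : (a.*2 + x + (a.*2 + x - a.*2 - x + (2 - x)) = (a.+1).*2)%N by lia.
rewrite sum_split.
rewrite (@odd_sum_eq _ _ _ (fun v => (if odd x && odd y then 'C(a,v) * 'C(b,v) else 0)
   + (if odd y then 'C(a,v.+1) * 'C(b,v.+1) * 'C(b,v) else 0))); last first.
  move=> v; rewrite !oddD.
  case: x hx => [|[|]] // _; case: y hy => [|[|]] // _;
    rewrite ?addn0 ?addn1 -?doubleS ?lucas00 ?lucas01 ?lucas10 ?lucas11 !oddM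
      ?lucas00 ?lucas01 ?lucas10 ?lucas11 /= ?odd_double ?oddM;
    try (by rewrite ?andbF ?andFb);
    rewrite ?doubleS ?oddbinSS -?doubleS ?lucas00 ?lucas01 ?lucas10 ?lucas11;
    by case: (odd 'C(a, v)); case: (odd 'C(b, v)); case: (odd 'C(a, v.+1)); case: (odd 'C(b, v.+1)).
rewrite big_split /= oddD.
case: (odd x); case: (odd y) => /=; rewrite ?big1_eq ?sum_sq -?[a.+1]addn1 ?S_ext //=.
- by rewrite addbC.
- by rewrite addbF.
Qed.

Lemma core P : forall Q, odd 'C(P + Q + 1, P) -> odd ('C(P + Q, P) + S P Q).
Proof.
elim/ltn_ind: P => P IH Q.
case: (posnP P) => [->|Ppos].
  by move=> _; rewrite /S big_geq // bin0.
have [a [x [hx hP]]] : exists a x, (x <= 1)%N /\ P = a.*2 + x.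
  exists P./2, (odd P); split; first by case: (odd P).
  by rewrite addnC -[X in X = _]odd_double_half.
have [b [y [hy hQ]]] : exists b y, (y <= 1)%N /\ Q = b.*2 + y.
  exists Q./2, (odd Q); split; first by case: (odd Q).
  by rewrite addnC -[X in X = _]odd_double_half.
have ha : (a < P)%N by lia.
rewrite oddD (S_rec hx hy hP hQ).
case: x hx hP => [|[|]] // _ hP; case: y hy hQ => [|[|]] // _ hQ; subst P Q.
- have -> : (a.*2 + 0 + (b.*2 + 0) + 1 = ((a+b).*2).+1)%N by lia.
  have -> : (a.*2 + 0 + (b.*2 + 0) = ((a+b).*2))%N by lia.
  by rewrite addn0 lucas10 lucas00 addbF.
- have -> : (a.*2 + 0 + (b.*2 + 1) + 1 = ((a+b).+1).*2)%N by lia.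
  have -> : (a.*2 + 0 + (b.*2 + 1) = ((a+b).*2).+1)%N by lia.
  rewrite addn0 lucas00 lucas10 /= addbF => h.
  have := IH a ha b; rewrite oddD; apply.
  by rewrite addn1.
- have -> : (a.*2 + 1 + (b.*2 + 0) + 1 = ((a+b).+1).*2)%N by lia.
  by rewrite addn1 lucas01.
- have -> : (a.*2 + 1 + (b.*2 + 1) + 1 = (((a+b).+1).*2).+1)%N by lia.
  have -> : (a.*2 + 1 + (b.*2 + 1) = ((a+b).+1).*2)%N by lia.
  rewrite addn1 lucas01 lucas11 /= => h.
  have := IH a ha b; rewrite oddD /= => h2.
  have : odd 'C(a + b + 1, a) by rewrite addn1.
  by move/h2; rewrite addbC.
Qed.

Definition c1 a t := if t is t'.+1 then 'C(a,t') else 0%N.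
Definition c2 a t := if t is t'.+2 then 'C(a,t') else 0%N.

Lemma W_par P Q : odd (\sum_(0 <= l < (P.*2).+2) 'C(P.*2,l) * ('C((Q.*2).+1, (P.*2).+1 - l) * c2 ((Q.*2).+1) ((P.*2).+1 - l))) = odd (S P Q).
Proof.
have -> : (P.*2).+2 = (P.+1).*2 by rewrite doubleS.
rewrite sum_split.
rewrite (@odd_sum_eq _ _ _ (fun v => 'C(P,v) * (if (P - v)%N is w.+1 then 'C(Q,w.+1)*'C(Q,w) else 0))); last first.
  move=> v; rewrite oddD !oddM lucas01 /= addbF lucas00.
  case: (leqP v P) => hv; last first.
    have -> : ((P.*2).+1 - v.*2 = 0)%N by lia.
    have -> : (P - v = 0)%N by lia.
    by rewrite /= !andbF.
  have -> : ((P.*2).+1 - v.*2 = ((P - v).*2).+1)%N by lia.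
  case: (P - v)%N => [|w] /=; first by rewrite !andbF.
  rewrite doubleS /= -[(w.*2).+3]/(((w.+1).*2).+1) !lucas11 oddM.
  by [].
rewrite big_nat_recr //= subnn muln0 addn0.
rewrite big_nat_rev /S; congr odd; apply: (@eq_big_nat nat 0 addn) => v /andP [_ hv].
rewrite add0n.
have -> : (P - (P - v.+1) = v.+1)%N by lia.
by rewrite bin_sub // mulnA.
Qed.

Lemma V_eq P Q : \sum_(0 <= l < (P.*2).+2) 'C(P.*2,l) * c1 ((Q.*2).+1) ((P.*2).+1 - l) = 'C(P.*2 + (Q.*2).+1, P.*2).
Proof.
rewrite big_nat_recr //= subnn muln0 addn0 -binomial.Vandermonde.
rewrite -(big_mkord xpredT (fun j => 'C(P.*2, j) * 'C((Q.*2).+1, P.*2 - j))).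
apply: eq_big_nat => l /andP [_ hl].
by rewrite subSn.
Qed.

Local Open Scope ring_scope.

Definition Qp a : {poly int} := \poly_(t < a.+1) (('C(a,t))%:Z ^+ 2).
Definition Ap j : {poly int} := \poly_(l < j.+1) ((-1) ^+ l * ('C(j,l))%:Z).

Lemma coefQ a t : (Qp a)`_t = ('C(a,t))%:Z ^+ 2.
Proof. by rewrite coef_poly; case: ltnP => // h; rewrite bin_small // expr2 mul0r. Qed.

Lemma coefA j l : (Ap j)`_l = (-1) ^+ l * ('C(j,l))%:Z.
Proof. by rewrite coef_poly; case: ltnP => // h; rewrite bin_small // mulr0. Qed.

Lemma binZ_sub a r : binZ a (a%:Z - r%:Z) = ('C(a,r))%:Z.
Proof.
case: (leqP r a) => h.
  by rewrite subzn //= bin_sub.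
have -> : a%:Z - r%:Z = Negz (r - a).-1.
  rewrite NegzE prednK; last by lia.
  rewrite -subzn; last by lia.
  by rewrite opprB.
by rewrite /= bin_small.
Qed.

Lemma lamE k i j : (j <= k)%N -> (i <= k)%N -> lam k i j = (Ap j * Qp (k - j))`_(k - i).
Proof.
move=> hj hi; rewrite coefM /lam big_mkord; apply: eq_bigr => [[l hl]] _ /=.
rewrite coefA coefQ.
have -> : i%:Z - j%:Z + l%:Z = (k-j)%N%:Z - (k-i-l)%N%:Z.
  lia.
by rewrite binZ_sub.
Qed.

Lemma ApS j : Ap j.+1 = Ap j * (1 - 'X).
Proof.
apply/polyP => t; rewrite mulrBr mulr1 coefB coefMX !coefA.
case: t => [|t] /=; first by rewrite !bin0 subr0.
rewrite binS PoszD exprS; ring.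
Qed.

Lemma coef1X (p : {poly int}) t : ((1 - 'X) * p)`_t = p`_t - (if t is t'.+1 then p`_t' else 0).
Proof. by rewrite mulrBl mul1r coefB coefXM; case: t. Qed.

Definition ee a t : int := - (3 * (c1 a t)%:Z ^+2 + ('C(a,t))%:Z * (c2 a t)%:Z
   + 2 * ('C(a,t))%:Z * (c1 a t)%:Z + 2 * (c1 a t)%:Z * (c2 a t)%:Z).

Lemma Ecoef a t : ((1 - 'X) * ((1 - 'X) * Qp a) - Qp a.+2)`_t = 2 * ee a t.
Proof.
rewrite coefB !coef1X /ee.
case: t => [|[|t]] /=; rewrite !coefQ ?coef1X ?coefQ /=.
- rewrite !bin0 /=; ring.
- rewrite !binS !bin0 !PoszD; ring.
- rewrite !binS !PoszD; ring.
Qed.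

Lemma dvd_sq (n : nat) : (2 %| n%:Z ^+ 2 + n%:Z)%Z.
Proof.
have -> : n%:Z ^+ 2 + n%:Z = (n * n.+1)%N%:Z by rewrite PoszM -(addn1 n) PoszD; ring.
rewrite dvdzE /= dvdn2 oddM /=; by case: (odd n).
Qed.

Lemma term_par a t l :
  (2 %| (-1) ^+ l * ee a t - (c1 a t + 'C(a,t) * c2 a t)%N%:Z)%Z.
Proof.
rewrite -signr_odd /ee; set y := c1 a t; set x := 'C(a,t); set z := c2 a t.
case: (odd l) => /=.
- have -> : (-1) ^+ 1 * - (3 * y%:Z ^+ 2 + x%:Z * z%:Z + 2 * x%:Z * y%:Z + 2 * y%:Z * z%:Z)
     - (y + x * z)%N%:Z = (y%:Z ^+ 2 + y%:Z) + 2 * (y%:Z ^+ 2 + x%:Z * y%:Z + y%:Z * z%:Z - y%:Z).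
    rewrite PoszD PoszM; ring.
  by rewrite rpredD ?dvd_sq // dvdz_mulr.
- have -> : (-1) ^+ 0 * - (3 * y%:Z ^+ 2 + x%:Z * z%:Z + 2 * x%:Z * y%:Z + 2 * y%:Z * z%:Z)
     - (y + x * z)%N%:Z = - ((y%:Z ^+ 2 + y%:Z) + 2 * (y%:Z ^+ 2 + x%:Z * z%:Z + x%:Z * y%:Z + y%:Z * z%:Z)).
    rewrite PoszD PoszM; ring.
  by rewrite rpredN rpredD ?dvd_sq // dvdz_mulr.
Qed.

Unset Implicit Arguments.

Theorem mainTheorem13 (k i : nat) :
  (3 <= k)%N -> odd k -> (1 <= i)%N -> (i <= k - 1)%N ->
  odd 'C(k, i) -> odd 'C(k - 1, i) ->
  ((lam k i (k - i + 1) - lam k i (k - i - 1)) %% 4)%Z = 2.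
Proof.
move=> hk ok hi hik h1 h2.
have kE : k = ((k./2).*2).+1 by rewrite -[k in LHS]odd_double_half ok.
have ie : ~~ odd i.
  apply/negP => oi; move: h2.
  have -> : (k - 1 = (k./2).*2)%N by rewrite {1}kE subn1.
  by rewrite -[i]odd_double_half oi add1n lucas01.
have iE : i = (i./2).*2 by rewrite -[i in LHS]odd_double_half (negbTE ie).
have [P [Q [kE2 iE2]]] : exists P Q, k = ((P + Q.+1).*2).+1 /\ i = (Q.+1).*2.
  exists (k./2 - i./2)%N, (i./2).-1; split; lia.
subst k i.
have hc : odd 'C(P + Q + 1, P).
  move: h2; rewrite subn1 /= lucas00.
  by rewrite [in X in 'C(_, X)](_ : Q.+1 = P + Q.+1 - P)%N ?bin_sub ?addn1 ?addnS //; lia.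
have e1 : (((P + Q.+1).*2).+1 - (Q.+1).*2 + 1 = (P.*2).+2)%N by lia.
have e2 : (((P + Q.+1).*2).+1 - (Q.+1).*2 - 1 = P.*2)%N by lia.
rewrite e1 e2 !lamE; try lia.
have e3 : (((P + Q.+1).*2).+1 - (P.*2).+2 = (Q.*2).+1)%N by lia.
have e4 : (((P + Q.+1).*2).+1 - P.*2 = ((Q.*2).+1).+2)%N by lia.
have e5 : (((P + Q.+1).*2).+1 - (Q.+1).*2 = (P.*2).+1)%N by lia.
rewrite e3 e4 e5 !ApS -coefB.
set p := P.*2; set a := (Q.*2).+1.
have -> : Ap p * (1 - 'X) * (1 - 'X) * Qp a - Ap p * Qp a.+2 =
          Ap p * ((1 - 'X) * ((1 - 'X) * Qp a) - Qp a.+2) by ring.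
rewrite coefM.
under eq_bigr do rewrite Ecoef coefA.
set X := \sum_(l < p.+2) (-1) ^+ l * ('C(p, l))%:Z * ee a (p.+1 - l).
have -> : \sum_(l < p.+2) (-1) ^+ l * ('C(p, l))%:Z * (2 * ee a (p.+1 - l)) = 2 * X.
  by rewrite /X mulr_sumr; apply: eq_bigr => l _; ring.
set N := (\sum_(l < p.+2) ('C(p,l) * (c1 a (p.+1-l) + 'C(a,p.+1-l) * c2 a (p.+1-l))))%N.
have hd : (2 %| X - N%:Z)%Z.
  rewrite /N (big_morph Posz PoszD (erefl 0%:Z)) /X -sumrB rpred_sum // => l _.
  rewrite PoszM.
  have -> : (-1) ^+ l * ('C(p, l))%:Z * ee a (p.+1 - l) -
    ('C(p, l))%:Z * (c1 a (p.+1 - l) + 'C(a, p.+1 - l) * c2 a (p.+1 - l))%N%:Z =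
    ('C(p, l))%:Z * ((-1) ^+ l * ee a (p.+1 - l) -
      (c1 a (p.+1 - l) + 'C(a, p.+1 - l) * c2 a (p.+1 - l))%N%:Z) by ring.
  by rewrite dvdz_mull // term_par.
have hN : odd N.
  rewrite /N -(big_mkord xpredT (fun l => ('C(p,l) * (c1 a (p.+1-l) + 'C(a,p.+1-l) * c2 a (p.+1-l)))%N)).
  under eq_bigr do rewrite mulnDr.
  rewrite big_split /= oddD /p /a V_eq W_par.
  have -> : (P.*2 + (Q.*2).+1 = ((P+Q).*2).+1)%N by lia.
  by rewrite lucas10 -oddD; apply: core.
case/dvdzP: hd => y hy.
have NE : N = ((N./2).*2).+1 by rewrite -[N in LHS]odd_double_half hN.
have -> : 2 * X = ((N./2)%:Z + y) * 4 + 2.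
  have -> : X = N%:Z + y * 2 by rewrite -hy; ring.
  have NE' : N%:Z = (N./2)%:Z * 2 + 1.
    by rewrite [in LHS]NE -(addn1 ((N./2).*2)) -muln2 PoszD PoszM.
  rewrite NE'; ring.
by rewrite modzMDl.
Qed.
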